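(* Let $N, F$ be positive integers with $F < N/2$, and let $M$ be encoded by a maximum-distance-separable code into $(F+1)N$ distinct fragments, any $F+1$ of which reconstruct $M$, partitioned into pairwise disjoint pools $S_1,\dots,S_N$ of size $F+1$, node $j$ storing only fragments from $S_j$. For an integer $x > F$ define the pruning rule $r(x) = \left\lceil \frac{F+1}{x-F} \right\rceil$. Let $Q \subseteq \{1,\dots,N\}$ be a set of nodes with $|Q| > F$ such that, before pruning, every node $u \in Q$ stores at least $r(|Q|)$ distinct fragments of $S_u$. Suppose each node $u$ prunes autonomously using some local value $q_u$ with $F < q_u \le |Q|$, i.e., it discards fragments until it retains exactly $\min(h_u, r(q_u))$ of them, where $h_u$ is the number it stored before pruning (different nodes may use different $q_u$). Then for every set $C$ of at most $F$ crashed nodes, the nodes of $Q \setminus C$ together still store at least $F+1$ distinct fragments of $M$ after pruning; hence $M$ remains reconstructable.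
   Context: $\lceil\cdot\rceil$ denotes the ceiling function. A crashed node loses all its fragments. The local value $q_u$ models a node's (possibly outdated) knowledge of how many nodes are known to store fragments of $M$. *)

(* Defs.v *)
From mathcomp Require Import all_boot.
Set Implicit Arguments. Unset Strict Implicit. Unset Printing Implicit Defensive.

Definition ceil_div (a b : nat) : nat := (a + b.-1) %/ b.

Definition prune_rule (F x : nat) : nat := ceil_div F.+1 (x - F).

(* Main.v *)
Require Import Defs.
From mathcomp Require Import all_boot.
From mathcomp Require Import zify.

Lemma ceil_ge a b : 0 < b -> a <= ceil_div a b * b.
Proof.
move=> hb; rewrite /ceil_div.
have := ltn_ceil (a + b.-1) hb. rewrite mulSn. lia.
Qed.

Lemma ceil_le a b c : 0 < b -> a <= c * b -> ceil_div a b <= c.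
Proof.
move=> hb h; rewrite /ceil_div -ltnS ltn_divLR //. rewrite mulSn. lia.
Qed.

Lemma card_bigcup_ge (I T : finType) (F : I -> {set T}) (r : nat) :
  forall n (A : {set I}), #|A| = n ->
  (forall i, i \in A -> r <= #|F i|) ->
  (forall i j, i \in A -> j \in A -> i != j -> [disjoint F i & F j]) ->
  r * n <= #|\bigcup_(i in A) F i|.
Proof.
elim=> [|n IH] A hA hr hd; first by rewrite muln0.
have: 0 < #|A| by rewrite hA.
case/card_gt0P=> a aA.
rewrite (big_setD1 a aA) /=.
have hA' : #|A :\ a| = n by move: hA; rewrite (cardsD1 a A) aA; case.
have IHa := IH (A :\ a) hA'
  (fun i hi => hr i (subsetP (subsetDl A [set a]) i hi))
  (fun i j hi hj => hd i j (subsetP (subsetDl A [set a]) i hi)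
                           (subsetP (subsetDl A [set a]) j hj)).
have disj : [disjoint F a & \bigcup_(i in A :\ a) F i].
  apply/bigcup_disjointP => i /setD1P [ia iA].
  by apply: hd; rewrite // eq_sym.
rewrite cardsU (disjoint_setI0 disj) cards0 subn0 mulnS.
exact: leq_add (hr a aA) IHa.
Qed.

Theorem mainTheorem2
  (N F : nat) (HN : 0 < N) (HF : 0 < F) (HFN : F.*2 < N)
  (Frag : finType)                          (* the fragments of M *)
  (HFrag : #|Frag| = F.+1 * N)
  (S : 'I_N -> {set Frag})                  (* pools S_1..S_N *)
  (HS_card : forall j, #|S j| = F.+1)
  (HS_disj : forall i j, i != j -> [disjoint S i & S j])
  (Hstore : 'I_N -> {set Frag})             (* fragments stored before pruning *)
  (Hstore_sub : forall j, Hstore j \subset S j)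
  (Q : {set 'I_N}) (HQ : F < #|Q|)
  (HQstore : forall u, u \in Q -> prune_rule F #|Q| <= #|Hstore u|)
  (q : 'I_N -> nat)                         (* local values q_u *)
  (Hq : forall u, u \in Q -> F < q u <= #|Q|)
  (P : 'I_N -> {set Frag})                  (* fragments retained after pruning *)
  (HP_sub : forall u, u \in Q -> P u \subset Hstore u)
  (HP_card : forall u, u \in Q -> #|P u| = minn #|Hstore u| (prune_rule F (q u)))
  (C : {set 'I_N}) (HC : #|C| <= F) :
  F.+1 <= #|\bigcup_(u in Q :\: C) P u|.
Proof.
set r := prune_rule F #|Q|.
set k := #|Q| - F.
have hk : 0 < k by rewrite /k; lia.
have hr : F.+1 <= r * k by exact: ceil_ge.
have hP : forall u, u \in Q :\: C -> r <= #|P u|.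
  move=> u /setDP [uQ _]; rewrite HP_card // leq_min HQstore //=.
  have [h1 h2] := andP (Hq u uQ).
  apply: ceil_le; first by rewrite /k; lia.
  have hq : 0 < q u - F by lia.
  rewrite /prune_rule; have hc := @ceil_ge F.+1 _ hq; apply: (leq_trans hc).
  apply: leq_mul => //; rewrite /k; lia.
have hd : forall i j, i \in Q :\: C -> j \in Q :\: C -> i != j ->
    [disjoint P i & P j].
  move=> i j /setDP [iQ _] /setDP [jQ _] ij.
  exact: (disjointW (subset_trans (HP_sub i iQ) (Hstore_sub i))
           (subset_trans (HP_sub j jQ) (Hstore_sub j)) (HS_disj i j ij)).
have hQC : k <= #|Q :\: C|.
  have := cardsD Q C. have := subset_leq_card (subsetIr Q C). rewrite /k; lia.
apply: (leq_trans hr).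
have hb := @card_bigcup_ge _ _ P r _ _ (erefl #|Q :\: C|) hP hd.
apply: leq_trans hb.
by rewrite leq_mul2l hQC orbT.
Qed.
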